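(* Let $n\geq 4$ and let $Q$ be any convex $n$-gon. Then there exist vectors $x_d\in X_Q$, one for each $d\in\mathrm{Diag}_n$, such that $\langle [\psi_{d'}], x_d\rangle>0$ for all $d,d'\in\mathrm{Diag}_n$ that do not cross (including $d=d'$). Equivalently, the secondary polytope $\Sigma_Q$ satisfies: there is an assignment $f\mapsto x_f\in X_Q$ on facets with $\langle f_1^\perp,x_{f_2}\rangle>0$ whenever facets $f_1,f_2$ share a vertex.
   Context: Let $Q$ be a convex $n$-gon in $\mathbb{R}^2$ with vertices $p_1,\dots,p_n$ in cyclic order; identify $p_i$ with label $i$, so triangulations of $Q$ (using only vertices of $Q$) are identified with elements of $\mathcal{T}_n$ (each triangulation identified with its set of diagonals) and diagonals with elements of $\mathrm{Diag}_n=\{\{i,j\}\subseteq[n]: i-j\not\equiv\pm1 \pmod n\}$. Two diagonals cross if they meet in the interior of $Q$. Let $X_Q$ be the space of formal combinations $\sum_{p\in V(Q)} c_p\cdot p$ with $\sum_p c_p=0$ and $\sum_p c_p p=0$ in $\mathbb{R}^2$; let $X_Q^*$ be the space of functions $V(Q)\to\mathbb{R}$ modulo restrictions of affine functions $\mathbb{R}^2\to\mathbb{R}$, with pairing $\langle[\psi],\sum_p c_p\cdot p\rangle=\sum_p c_p\psi(p)$. For a triangulation $T$ let $v_T=(\operatorname{area}(Q_{T,p}))_{p\in V(Q)}$ where $Q_{T,p}$ is the union of the triangles of $T$ having $p$ as a vertex. The secondary polytope $\Sigma_Q$ is the convex hull of the $v_T$, translated to lie in $X_Q$. It is known (Gelfand–Kapranov–Zelevinsky)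 that $\Sigma_Q$ is a full-dimensional polytope in the $(n-3)$-dimensional space $X_Q$ realizing the associahedron: its vertices are exactly the points $v_T$, $T\in\mathcal{T}_n$; its facets are $f_d$, $d\in\mathrm{Diag}_n$, where $f_d$ contains $v_T$ iff $d\in T$; and an outward normal of $f_d$ is $f_d^\perp=[\psi_d]$, where $\psi_d=\min(\ell_d,0)$ restricted to $V(Q)$ and $\ell_d$ is any nonzero affine function vanishing at both endpoints of $d$. Two facets $f_d,f_{d'}$ share a vertex iff $d,d'$ do not cross. *)

(* Defs.v *)
From HB Require Import structures.
From mathcomp Require Import all_boot all_order all_algebra.
Set Implicit Arguments. Unset Strict Implicit. Unset Printing Implicit Defensive.
Import Order.TTheory GRing.Theory Num.Theory.
Local Open Scope ring_scope.

Section Polygon.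
Variable R : realFieldType.
Variable n : nat.

Definition orient (a b c : R * R) : R :=
  (b.1 - a.1) * (c.2 - a.2) - (b.2 - a.2) * (c.1 - a.1).

(* p_0, ..., p_{n-1} (label i+1 in the paper) are the vertices of a convex
   n-gon in cyclic order (counterclockwise or clockwise): every triple of
   vertices taken in cyclic order has the same strict orientation. *)
Definition convex_polygon (p : 'I_n -> R * R) : Prop :=
  (forall i j k : 'I_n, (i < j)%N -> (j < k)%N -> 0 < orient (p i) (p j) (p k)) \/
  (forall i j k : 'I_n, (i < j)%N -> (j < k)%N -> orient (p i) (p j) (p k) < 0).

(* diagonals {i, j}, written with i < j: i - j not congruent to 0, 1, -1 mod n *)
Definition is_diag (i j : 'I_n) : bool :=
  [&& (i < j)%N, (i.+1 < j)%N & ~~ ((i == 0%N :> nat) && (j == n.-1 :> nat))].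

(* two diagonals {i,j}, {k,l} (i<j, k<l) of a convex polygon cross (meet in
   the interior of Q) iff their endpoints strictly interleave *)
Definition cross (i j k l : 'I_n) : bool :=
  ((i < k)%N && (k < j)%N && (j < l)%N) || ((k < i)%N && (i < l)%N && (l < j)%N).

(* X_Q: formal combinations sum_p c_p p with sum c_p = 0 and sum c_p p = 0 *)
Definition in_XQ (p : 'I_n -> R * R) (c : 'I_n -> R) : Prop :=
  [/\ \sum_(k < n) c k = 0,
      \sum_(k < n) c k * (p k).1 = 0 &
      \sum_(k < n) c k * (p k).2 = 0].

(* an affine function R^2 -> R, (x,y) |-> a x + b y + e, coded by (a, b, e) *)
Definition affine_eval (f : R * R * R) (q : R * R) : R :=
  f.1.1 * q.1 + f.1.2 * q.2 + f.2.

Definition nonzero_affine (f : R * R * R) : Prop := f != (0, 0, 0).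

Definition psi_of (p : 'I_n -> R * R) (f : R * R * R) (k : 'I_n) : R :=
  Num.min (affine_eval f (p k)) 0.

Definition pairing (psi c : 'I_n -> R) : R := \sum_(k < n) c k * psi k.

End Polygon.

(* Main.v *)
Require Import Defs.
From HB Require Import structures.
From mathcomp Require Import all_boot all_order all_algebra.
From mathcomp Require Import ring lra zify.
Import Order.TTheory GRing.Theory Num.Theory.
Local Open Scope ring_scope.

Section Proof.
Variable R : realFieldType.
Variable n : nat.
Variable p : 'I_n -> R * R.

Lemma sum_affine (c : 'I_n -> R) (A B E : R) :
  \sum_(w < n) c w * (A * (p w).1 + B * (p w).2 + E) =
  A * (\sum_(w<n) c w * (p w).1) + B * (\sum_(w<n) c w * (p w).2) + E * \sum_(w<n) c w.
Proof.
rewrite !mulr_sumr -!big_split /=; apply: eq_bigr => w _; ring.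
Qed.

Lemma orient_aff (a b q : R * R) : orient a b q =
  (-(b.2-a.2)) * q.1 + (b.1-a.1) * q.2 + ((b.2-a.2)*a.1 - (b.1-a.1)*a.2).
Proof. rewrite /orient; ring. Qed.

Lemma pair_orient (x : 'I_n -> R) a b : in_XQ p x ->
  \sum_(w < n) x w * orient a b (p w) = 0.
Proof.
under eq_bigr => w _ do rewrite orient_aff.
by rewrite sum_affine; case=> -> -> ->; rewrite !mulr0 !addr0.
Qed.

Lemma sum_pos (F : 'I_n -> R) w0 : (forall w, 0 <= F w) -> 0 < F w0 ->
  0 < \sum_(w < n) F w.
Proof.
move=> H H0; rewrite (bigD1 w0) //=; apply: (lt_le_trans H0).
rewrite lerDl; apply: sumr_ge0 => *; exact: H.
Qed.

Lemma sum_delta (i : 'I_n) (F : 'I_n -> R) :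
  \sum_(w < n) (if w == i then F w else 0) = F i.
Proof. by rewrite -big_mkcond big_pred1_eq. Qed.

Definition o (i j w : 'I_n) := orient (p i) (p j) (p w).
Definition Pn i j := \sum_(w<n) Num.max (- o i j w) 0.
Definition Nn i j := \sum_(w<n) Num.max (o i j w) 0.
Definition cc i j w := - (if 0 < o i j w then Pn i j
                          else if o i j w < 0 then Nn i j else 0).
Definition C0 i j := \sum_(w<n) cc i j w.
Definition Cx i j := \sum_(w<n) cc i j w * (p w).1.
Definition Cy i j := \sum_(w<n) cc i j w * (p w).2.
Definition dx (i j : 'I_n) := (p j).1 - (p i).1.
Definition dy (i j : 'I_n) := (p j).2 - (p i).2.
Definition tt i j := (dx i j * (C0 i j * (p i).1 - Cx i j)
   + dy i j * (C0 i j * (p i).2 - Cy i j)) / (dx i j ^+ 2 + dy i j ^+ 2).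
Definition xx i j w := cc i j w + (if w == i then - C0 i j - tt i j else 0)
   + (if w == j then tt i j else 0).

Lemma cc_o i j : \sum_(w<n) cc i j w * o i j w = 0.
Proof.
have E : forall w, cc i j w * o i j w =
   - (Pn i j * Num.max (o i j w) 0) + Nn i j * Num.max (- o i j w) 0.
  move=> w; rewrite /cc; case: (ltrgt0P (o i j w)) => h.
  - rewrite (max_r (ltW _)) ?oppr_lt0 //; ring.
  - rewrite (max_l (ltW _)) ?oppr_gt0 //; ring.
  - by rewrite h oppr0 maxxx mul0r mulr0 oppr0 mulr0 addr0.
under eq_bigr => w _ do rewrite E.
by rewrite big_split /= sumrN -!mulr_sumr -/(Pn i j) -/(Nn i j) mulrC addNr.
Qed.

Lemma Kij i j : dx i j * (Cy i j - (p i).2 * C0 i j)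
   - dy i j * (Cx i j - (p i).1 * C0 i j) = 0.
Proof.
move: (cc_o i j); rewrite /o.
under eq_bigr => w _ do rewrite orient_aff.
rewrite sum_affine -/(Cx i j) -/(Cy i j) -/(C0 i j) => H.
by rewrite -H /dx /dy; ring.
Qed.

Lemma if_mul (b : bool) (a y : R) : (if b then a else 0) * y = if b then a * y else 0.
Proof. by case: b; rewrite ?mul0r. Qed.

Lemma tt_eq i j : dx i j ^+ 2 + dy i j ^+ 2 != 0 ->
  tt i j * dx i j = C0 i j * (p i).1 - Cx i j /\
  tt i j * dy i j = C0 i j * (p i).2 - Cy i j.
Proof.
move=> hd; have K := Kij i j.
set u := C0 i j * (p i).1 - Cx i j; set v := C0 i j * (p i).2 - Cy i j.
set num := dx i j * u + dy i j * v.
have E1 : num * dx i j = u * (dx i j ^+ 2 + dy i j ^+ 2).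
  apply/eqP; rewrite -subr_eq0; apply/eqP.
  have -> : num * dx i j - u * (dx i j ^+ 2 + dy i j ^+ 2) =
    - dy i j * (dx i j * (Cy i j - (p i).2 * C0 i j) - dy i j * (Cx i j - (p i).1 * C0 i j)).
    rewrite /num /u /v; ring.
  by rewrite K mulr0.
have E2 : num * dy i j = v * (dx i j ^+ 2 + dy i j ^+ 2).
  apply/eqP; rewrite -subr_eq0; apply/eqP.
  have -> : num * dy i j - v * (dx i j ^+ 2 + dy i j ^+ 2) =
    dx i j * (dx i j * (Cy i j - (p i).2 * C0 i j) - dy i j * (Cx i j - (p i).1 * C0 i j)).
    rewrite /num /u /v; ring.
  by rewrite K mulr0.
rewrite /tt -/u -/v -/num; split.
  by rewrite mulrAC E1 mulfK.
by rewrite mulrAC E2 mulfK.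
Qed.

Lemma xx_XQ i j : i != j -> dx i j ^+ 2 + dy i j ^+ 2 != 0 -> in_XQ p (xx i j).
Proof.
move=> hij hd; have [T1 T2] := tt_eq i j hd.
split.
- rewrite /xx !big_split /= !sum_delta -/(C0 i j); ring.
- under eq_bigr => w _ do rewrite /xx !mulrDl !if_mul.
  rewrite !big_split /= (sum_delta i (fun w => _ * (p w).1))
    (sum_delta j (fun w => _ * (p w).1)) -/(Cx i j).
  have : Cx i j + (- C0 i j - tt i j) * (p i).1 + tt i j * (p j).1 =
     Cx i j - C0 i j * (p i).1 + tt i j * dx i j by rewrite /dx; ring.
  by move=> ->; rewrite T1; ring.
- under eq_bigr => w _ do rewrite /xx !mulrDl !if_mul.
  rewrite !big_split /= (sum_delta i (fun w => _ * (p w).2))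
    (sum_delta j (fun w => _ * (p w).2)) -/(Cy i j).
  have : Cy i j + (- C0 i j - tt i j) * (p i).2 + tt i j * (p j).2 =
     Cy i j - C0 i j * (p i).2 + tt i j * dy i j by rewrite /dy; ring.
  by move=> ->; rewrite T2; ring.
Qed.

Lemma diag_in (i j : 'I_n) : is_diag i j -> exists w1 : 'I_n, (i < w1 < j)%N.
Proof.
case/and3P=> h1 h2 h3.
have hw : (i.+1 < n)%N by apply: ltn_trans h2 (ltn_ord j).
by exists (Ordinal hw) => /=; lia.
Qed.
Arguments diag_in {i j}.

Lemma diag_out (i j : 'I_n) : is_diag i j -> exists w2 : 'I_n, (w2 < i)%N || (j < w2)%N.
Proof.
case/and3P=> h1 h2 h3.
have hj := ltn_ord j.
case: (posnP i) => hi.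
  have hw : (n.-1 < n)%N by lia.
  exists (Ordinal hw) => /=. move: h3; rewrite hi /=; lia.
have hw : (0 < n)%N by lia.
by exists (Ordinal hw) => /=; lia.
Qed.
Arguments diag_out {i j}.

Variable s : R.
Hypothesis hs1 : s = 1 \/ s = -1.
Hypothesis hs : forall a b c : 'I_n, (a < b)%N -> (b < c)%N ->
  0 < s * orient (p a) (p b) (p c).

Lemma o_in (k l w : 'I_n) : (k < w)%N -> (w < l)%N -> s * o k l w < 0.
Proof.
move=> h1 h2; have := hs _ _ _ h1 h2.
have -> : o k l w = - orient (p k) (p w) (p l) by rewrite /o /orient; ring.
by rewrite mulrN oppr_lt0.
Qed.
Arguments o_in {k l w}.

Lemma o_left (k l w : 'I_n) : (w < k)%N -> (k < l)%N -> 0 < s * o k l w.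
Proof.
move=> h1 h2; have := hs _ _ _ h1 h2.
have -> : o k l w = orient (p w) (p k) (p l) by rewrite /o /orient; ring.
by [].
Qed.
Arguments o_left {k l w}.

Lemma o_right (k l w : 'I_n) : (k < l)%N -> (l < w)%N -> 0 < s * o k l w.
Proof. exact: hs. Qed.
Arguments o_right {k l w}.

Lemma o_k (k l : 'I_n) : o k l k = 0.
Proof. rewrite /o /orient; ring. Qed.
Lemma o_l (k l : 'I_n) : o k l l = 0.
Proof. rewrite /o /orient; ring. Qed.

Lemma hneg (k l w : 'I_n) : (k < l)%N -> s * o k l w < 0 -> (k < w)%N && (w < l)%N.
Proof.
move=> hkl h.
case: (ltngtP w k) => hwk.
- by have := o_left hwk hkl; rewrite ltNge (ltW h).
- case: (ltngtP w l) => hwl.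
  + by apply/andP.
  + by have := o_right hkl hwl; rewrite ltNge (ltW h).
  + by move: h; rewrite (ord_inj hwl) o_l mulr0 ltxx.
- by move: h; rewrite (ord_inj hwk) o_k mulr0 ltxx.
Qed.
Arguments hneg {k l w}.

Lemma hpos (k l w : 'I_n) : (k < l)%N -> 0 < s * o k l w -> (w < k)%N || (l < w)%N.
Proof.
move=> hkl h.
case: (ltngtP w k) => hwk //.
- case: (ltngtP w l) => hwl.
  + by have := o_in hwk hwl; rewrite ltNge (ltW h).
  + by apply/orP; right.
  + by move: h; rewrite (ord_inj hwl) o_l mulr0 ltxx.
- by move: h; rewrite (ord_inj hwk) o_k mulr0 ltxx.
Qed.
Arguments hpos {k l w}.

Lemma o_nz (i j w : 'I_n) : (i < j)%N -> (w : nat) <> i -> (w : nat) <> j -> o i j w != 0.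
Proof.
move=> hij hi hj; apply/eqP => h0.
have : s * o i j w != 0.
  case: (ltngtP w i) => hwi; last by [].
  - by rewrite gt_eqF // o_left.
  - case: (ltngtP w j) => hwj; last by [].
    + by rewrite lt_eqF // o_in.
    + by rewrite gt_eqF // o_right.
by rewrite h0 mulr0 eqxx.
Qed.
Arguments o_nz {i j w}.

Lemma o_pos_neg (i j : 'I_n) : is_diag i j ->
  (exists w, 0 < o i j w) /\ (exists w, o i j w < 0).
Proof.
move=> hd; have [w1 h1] := diag_in hd; have [w2 h2] := diag_out hd.
have hij : (i < j)%N by case/and3P: hd.
have n1 : s * o i j w1 < 0 by apply: o_in; lia.
have p2 : 0 < s * o i j w2.
  case/orP: h2 => h2; [apply: o_left | apply: o_right] => //; lia.
case: hs1 => hs0; move: n1 p2; rewrite hs0 ?mul1r ?mulN1r ?oppr_lt0 ?oppr_gt0 => n1 p2.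
  by split; [exists w2 | exists w1].
by split; [exists w1 | exists w2].
Qed.
Arguments o_pos_neg {i j}.

Lemma PN_pos (i j : 'I_n) : is_diag i j -> 0 < Pn i j /\ 0 < Nn i j.
Proof.
move=> hd; have [[wp hp] [wn hn]] := o_pos_neg hd.
split.
  apply: (@sum_pos _ wn); first by move=> w; rewrite le_max lexx orbT.
  by rewrite (max_l (ltW _)) ?oppr_gt0.
apply: (@sum_pos _ wp); first by move=> w; rewrite le_max lexx orbT.
by rewrite (max_l (ltW _)).
Qed.
Arguments PN_pos {i j}.

Lemma cc_neg (i j w : 'I_n) : is_diag i j -> (w : nat) <> i -> (w : nat) <> j -> cc i j w < 0.
Proof.
move=> hd hi hj; have [hP hN] := PN_pos hd.
have hij : (i < j)%N by case/and3P: hd.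
have := o_nz hij hi hj; rewrite /cc.
case: (ltrgt0P (o i j w)) => h; rewrite ?eqxx // => _; by rewrite oppr_lt0.
Qed.
Arguments cc_neg {i j w}.

Lemma den_nz (i j : 'I_n) : is_diag i j -> dx i j ^+ 2 + dy i j ^+ 2 != 0.
Proof.
move=> hd; have [[wp hp] _] := o_pos_neg hd.
apply/negP; rewrite paddr_eq0 ?sqr_ge0 // !sqrf_eq0 => /andP[/eqP h1 /eqP h2].
move: hp; have -> : o i j wp = dx i j * ((p wp).2 - (p i).2) - dy i j * ((p wp).1 - (p i).1).
  by rewrite /o /orient /dx /dy.
by rewrite h1 h2 !mul0r subrr ltxx.
Qed.
Arguments den_nz {i j}.

Lemma xx_out (i j w : 'I_n) : (w : nat) <> i -> (w : nat) <> j -> xx i j w = cc i j w.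
Proof.
move=> hi hj; rewrite /xx.
case: eqP => [e|_]; first by move: hi; rewrite e.
case: eqP => [e|_]; first by move: hj; rewrite e.
by rewrite !addr0.
Qed.

Lemma final (i j : 'I_n) (g : 'I_n -> R) w0 : is_diag i j ->
  (forall w, g w < 0 -> (w : nat) <> i /\ (w : nat) <> j) -> g w0 < 0 ->
  0 < \sum_(w < n) xx i j w * Num.min (g w) 0.
Proof.
move=> hd hg hw0.
have key : forall w, g w < 0 -> 0 < xx i j w * Num.min (g w) 0.
  move=> w hw; have [hi hj] := hg w hw.
  rewrite xx_out // (min_l (ltW hw)) nmulr_rgt0 //; exact: cc_neg.
apply: (@sum_pos _ w0); last exact: key.
move=> w; case: (ltP (g w) 0) => hw; first by have := key w hw; rewrite (min_l (ltW hw)) => /ltW.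
by rewrite mulr0.
Qed.

End Proof.
Arguments o {R n} p.
Arguments xx {R n} p.
Arguments dx {R n} p.
Arguments dy {R n} p.
Arguments den_nz {R n p s} hs1 hs {i j}.
Arguments final {R n p s} hs1 hs {i j g w0}.
Arguments hpos {R n p s} hs {k l w}.
Arguments hneg {R n p s} hs {k l w}.
Arguments o_left {R n p s} hs {k l w}.
Arguments o_right {R n p s} hs {k l w}.
Arguments o_in {R n p s} hs {k l w}.
Arguments diag_in {n i j}.
Arguments diag_out {n i j}.
Arguments xx_XQ {R n p i j}.

Lemma min_scale_pos (R : realFieldType) (mu y : R) : 0 < mu ->
  Num.min (mu * y) 0 = mu * Num.min y 0.
Proof.
move=> hm; case: (ltrgt0P y) => hy.
- by rewrite (min_r (ltW (mulr_gt0 hm hy))) mulr0.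
- by rewrite (min_l (ltW _)) // pmulr_rlt0.
- by rewrite hy !mulr0 ?minxx.
Qed.

Lemma min_scale_neg (R : realFieldType) (mu y : R) : mu < 0 ->
  Num.min (mu * y) 0 = mu * y - mu * Num.min y 0.
Proof.
move=> hm; case: (ltrgt0P y) => hy.
- by rewrite (min_l (ltW _)) ?nmulr_rlt0 // mulr0 subr0.
- by rewrite (min_r (ltW _)) ?nmulr_rgt0 // subrr.
- by rewrite hy !mulr0 ?minxx subrr.
Qed.

Lemma pair_scale (R : realFieldType) n (p : 'I_n -> R * R) (x : 'I_n -> R) k l mu :
  in_XQ p x -> mu != 0 ->
  \sum_(w < n) x w * Num.min (mu * o p k l w) 0 =
  `|mu| * \sum_(w < n) x w * Num.min (o p k l w) 0.
Proof.
move=> hx; case: (ltrgt0P mu) => hm // _.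
- rewrite ?(gtr0_norm hm) mulr_sumr; apply: eq_bigr => w _.
  rewrite min_scale_pos //; ring.
- rewrite ?(ltr0_norm hm).
  under eq_bigr => w _ do rewrite min_scale_neg // mulrBr.
  rewrite big_split /= sumrN.
  have -> : \sum_(i < n) x i * (mu * o p k l i) = mu * \sum_(i < n) x i * o p k l i.
    rewrite mulr_sumr; apply: eq_bigr => w _; ring.
  rewrite /o pair_orient // mulr0 add0r mulr_sumr -sumrN.
  apply: eq_bigr => w _; ring.
Qed.

Lemma f_repr (R : realFieldType) n (p : 'I_n -> R * R) (k l : 'I_n) f :
  dx p k l ^+ 2 + dy p k l ^+ 2 != 0 -> nonzero_affine f ->
  affine_eval f (p k) = 0 -> affine_eval f (p l) = 0 ->
  exists2 lam, lam != 0 & forall w, affine_eval f (p w) = lam * o p k l w.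
Proof.
case: f => [[a b] e]; rewrite /nonzero_affine /affine_eval /= => hden hnz hk hl.
set D := dx p k l ^+ 2 + dy p k l ^+ 2.
set mu := b * dx p k l - a * dy p k l.
have hab : a * dx p k l + b * dy p k l = 0.
  have -> : a * dx p k l + b * dy p k l =
    (a * (p l).1 + b * (p l).2 + e) - (a * (p k).1 + b * (p k).2 + e).
    by rewrite /dx /dy; ring.
  by rewrite hk hl subrr.
have hmu : mu != 0.
  apply/eqP => hmu.
  have ha : a * D = 0.
    have -> : a * D = dx p k l * (a * dx p k l + b * dy p k l) - dy p k l * mu.
      by rewrite /D /mu; ring.
    by rewrite hab hmu !mulr0 subrr.
  have hb : b * D = 0.
    have -> : b * D = dy p k l * (a * dx p k l + b * dy p k l) + dx p k l * mu.
      by rewrite /D /mu; ring.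
    by rewrite hab hmu !mulr0 addr0.
  move/eqP: ha; rewrite mulf_eq0 (negbTE hden) orbF => /eqP ha.
  move/eqP: hb; rewrite mulf_eq0 (negbTE hden) orbF => /eqP hb.
  move: hk; rewrite ha hb !mul0r !add0r => he.
  by move: hnz; rewrite ha hb he eqxx.
exists (mu / D); first by rewrite mulf_neq0 // invr_neq0.
move=> w.
have E : D * (a * (p w).1 + b * (p w).2 + e) = mu * o p k l w.
  have -> : D * (a * (p w).1 + b * (p w).2 + e) = mu * o p k l w +
     (a * dx p k l + b * dy p k l) * (dx p k l * ((p w).1 - (p k).1) + dy p k l * ((p w).2 - (p k).2))
     + D * (a * (p k).1 + b * (p k).2 + e).
    by rewrite /D /mu /o /orient /dx /dy; ring.
  by rewrite hab hk mul0r mulr0 !addr0.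
rewrite -(mulKf hden (a * (p w).1 + b * (p w).2 + e)) E.
by rewrite mulrA [D^-1 * mu]mulrC.
Qed.

Theorem lemma2p6 (R : realFieldType) (n : nat) (p : 'I_n -> R * R) :
  (4 <= n)%N ->
  convex_polygon p ->
  exists x : 'I_n -> 'I_n -> ('I_n -> R),
    (forall i j : 'I_n, is_diag i j -> in_XQ p (x i j)) /\
    (forall i j k l : 'I_n, is_diag i j -> is_diag k l -> ~~ cross i j k l ->
       forall f : R * R * R, nonzero_affine f ->
         affine_eval f (p k) = 0 -> affine_eval f (p l) = 0 ->
         0 < pairing (psi_of p f) (x i j)).
Proof.
move=> hn hconv.
have [s [hs1 hs]] : exists s : R, (s = 1 \/ s = -1) /\ forall a b c : 'I_n,
    (a < b)%N -> (b < c)%N -> 0 < s * orient (p a) (p b) (p c).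
  case: hconv => h; [exists 1 | exists (-1)]; split; auto;
    move=> a b c h1 h2; rewrite ?mul1r ?mulN1r ?oppr_gt0; exact: h.
have hsn : `|s| = 1 by case: hs1 => ->; rewrite ?normrN normr1.
have hs0 : s != 0 by case: hs1 => ->; rewrite ?oppr_eq0 oner_eq0.
exists (xx p); split.
  move=> i j hd; apply: xx_XQ; last exact: (den_nz hs1 hs hd).
  by case/and3P: hd => h1 _ _; apply/eqP => e; move: h1; rewrite e ltnn.
move=> i j k l hij hkl hcr f hf hk hl.
have hx : in_XQ p (xx p i j).
  apply: xx_XQ; last exact: (den_nz hs1 hs hij).
  by case/and3P: hij => h1 _ _; apply/eqP => e; move: h1; rewrite e ltnn.
have [lam hlam hf'] := @f_repr R n p k l f (den_nz hs1 hs hkl) hf hk hl.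
rewrite /pairing /psi_of; under eq_bigr => w _ do rewrite hf'.
rewrite pair_scale // pmulr_rgt0 ?normr_gt0 //.
have hij' : (i < j)%N by case/and3P: hij.
have hkl' : (k < l)%N by case/and3P: hkl.
move: hcr; rewrite /cross => hcr.
case hA : ((k < i < l) || (k < j < l))%N.
- have [hki hjl] : (k <= i)%N /\ (j <= l)%N by split; lia.
  have E := @pair_scale R n p (xx p i j) k l (- s) hx.
  rewrite normrN hsn mul1r in E; rewrite -E ?oppr_eq0 //.
  have [w0 hw0] := diag_out hkl.
  apply: (final hs1 hs hij (w0 := w0)).
  + move=> w; rewrite mulNr oppr_lt0 => /(hpos hs hkl') h; lia.
  + rewrite mulNr oppr_lt0; case/orP: hw0 => h.
    * exact: (o_left hs h hkl').
    * exact: (o_right hs hkl' h).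
- have E := @pair_scale R n p (xx p i j) k l s hx.
  rewrite hsn mul1r in E; rewrite -E //.
  have [w0 hw0] := diag_in hkl.
  apply: (final hs1 hs hij (w0 := w0)).
  + move=> w /(hneg hs hkl') h; lia.
  + apply: (o_in hs); lia.
Qed.
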